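(* Sign correctness may fail for multifold edges under monotonic semantics: there exist a gradual semantics $\sigma$ satisfying monotonicity on all acyclic QBAFs, an acyclic QBAF $\mathcal{Q}=\langle\mathcal{A},\mathcal{R}^-,\mathcal{R}^+,\tau\rangle$, an argument $\alpha\in\mathcal{A}$ and an edge $r\in\mathcal{R}$ that is multifold w.r.t. $\alpha$ such that sign correctness fails, i.e. either $r\in\mathcal{R}^-$ and $\phi^\alpha_\sigma(r)>0$, or $r\in\mathcal{R}^+$ and $\phi^\alpha_\sigma(r)<0$.
   Context: A QBAF is a quadruple $\mathcal{Q}=\langle\mathcal{A},\mathcal{R}^-,\mathcal{R}^+,\tau\rangle$ with $\mathcal{A}$ a finite set of arguments, $\mathcal{R}^-,\mathcal{R}^+\subseteq\mathcal{A}\times\mathcal{A}$ disjoint attack and support relations, and $\tau:\mathcal{A}\to[0,1]$ base scores; $\mathcal{R}=\mathcal{R}^-\cup\mathcal{R}^+$, $\mathcal{R}(\beta)=\{(\beta,\gamma)\in\mathcal{R}\}$; acyclic means $(\mathcal{A},\mathcal{R})$ has no directed cycle. A gradual semantics $\sigma$ assigns strengths in $[0,1]$ to arguments of QBAFs. For $\mathcal{S}\subseteq\mathcal{R}$, $\sigma_{\mathcal{S}}(\alpha)$ is the strength of $\alpha$ in $\langle\mathcal{A},\mathcal{R}^-\cap\mathcal{S},\mathcal{R}^+\cap\mathcal{S},\tau\rangle$; for $\tau':\mathcal{A}\to[0,1]$, $\sigma_{\tau'}(\alpha)$ is the strength of $\alpha$ in $\langle\mathcal{A},\mathcal{R}^-,\mathcal{R}^+,\tau'\rangle$.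 The RAE is $\phi^\alpha_\sigma(r)=\sum_{\mathcal{S}\subseteq\mathcal{R}\setminus\{r\}}\frac{(|\mathcal{R}|-|\mathcal{S}|-1)!|\mathcal{S}|!}{|\mathcal{R}|!}[\sigma_{\mathcal{S}\cup\{r\}}(\alpha)-\sigma_{\mathcal{S}}(\alpha)]$. $\sigma$ satisfies monotonicity on a class of QBAFs if for every QBAF in the class, every $\alpha,\beta\in\mathcal{A}$ with $\alpha\neq\beta$ and $\mathcal{R}(\beta)=\{(\beta,\alpha)\}$, and every $\tau':\mathcal{A}\to[0,1]$: (1) if $(\beta,\alpha)\in\mathcal{R}^-$ then $\sigma(\alpha)\le\sigma_{\mathcal{R}\setminus\{(\beta,\alpha)\}}(\alpha)$; (2) if $(\beta,\alpha)\in\mathcal{R}^+$ then $\sigma(\alpha)\ge\sigma_{\mathcal{R}\setminus\{(\beta,\alpha)\}}(\alpha)$; (3) if $(\beta,\alpha)\in\mathcal{R}^-$, $\tau(\beta)\le\tau'(\beta)$ and $\tau'=\tau$ on $\mathcal{A}\setminus\{\beta\}$, then $\sigma(\alpha)\ge\sigma_{\tau'}(\alpha)$; (4) if $(\beta,\alpha)\in\mathcal{R}^+$, $\tau(\beta)\le\tau'(\beta)$ and $\tau'=\tau$ on $\mathcal{A}\setminus\{\beta\}$, then $\sigma(\alpha)\le\sigma_{\tau'}(\alpha)$. A path from $\gamma$ to $\alpha$ is a finite sequence of edges $(x_0,x_1),\dots,(x_{k-1},x_k)\in\mathcal{R}$ with $x_0=\gamma$, $x_k=\alpha$. An edge $(\beta,\gamma)\in\mathcal{R}$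 with $\beta\neq\alpha$ is multifold w.r.t. $\alpha$ if $\gamma\neq\alpha$ and there is more than one path from $\gamma$ to $\alpha$ in $\mathcal{Q}$. *)

(* Defs.v *)
From HB Require Import structures.
From mathcomp Require Import all_boot all_order all_algebra.
From mathcomp Require Import reals.
Set Implicit Arguments. Unset Strict Implicit. Unset Printing Implicit Defensive.
Import Order.TTheory GRing.Theory Num.Theory.
Local Open Scope ring_scope.

(* A QBAF over the finite set of arguments T (A = all of T). *)
Record qbaf (R : realType) (T : finType) := Qbaf {
  qatt : {set T * T};
  qsup : {set T * T};
  bs  : T -> R
}.

Section QBAF.
Variables (R : realType) (T : finType).
Implicit Types (Q : qbaf R T).

Definition rels Q : {set T * T} := qatt Q :|: qsup Q.

Definition wf_qbaf Q : Prop :=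
  qatt Q :&: qsup Q = set0 /\ forall a, 0 <= bs Q a <= 1.

Definition restrict Q (S : {set T * T}) : qbaf R T :=
  Qbaf (qatt Q :&: S) (qsup Q :&: S) (bs Q).

Definition rebase Q (tau' : T -> R) : qbaf R T := Qbaf (qatt Q) (qsup Q) tau'.

Definition out_edges Q (b : T) : {set T * T} := [set e in rels Q | e.1 == b].

Fixpoint is_path (E : {set T * T}) (g a : T) (s : seq (T * T)) : bool :=
  match s with
  | [::] => g == a
  | e :: s' => [&& e \in E, e.1 == g & is_path E e.2 a s']
  end.

Definition edge_rel Q : rel T := fun x y => (x, y) \in rels Q.

Definition qbaf_acyclic Q : Prop :=
  forall x y, edge_rel Q x y -> ~~ connect (edge_rel Q) y x.

Definition qbaf_multifold Q (a : T) (r : T * T) : Prop :=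
  [/\ r \in rels Q, r.1 != a, r.2 != a &
      exists s1 s2, [/\ s1 != s2, is_path (rels Q) r.2 a s1 & is_path (rels Q) r.2 a s2]].

End QBAF.

Definition semantics (R : realType) := forall T : finType, qbaf R T -> T -> R.

Definition strength_in_01 (R : realType) (sigma : semantics R) : Prop :=
  forall (T : finType) (Q : qbaf R T), wf_qbaf Q -> forall a, 0 <= sigma T Q a <= 1.

Definition monotonic_acyclic (R : realType) (sigma : semantics R) : Prop :=
  forall (T : finType) (Q : qbaf R T), wf_qbaf Q -> qbaf_acyclic Q ->
  forall (a b : T), a != b -> out_edges Q b = [set (b, a)] ->
  forall tau' : T -> R, (forall x, 0 <= tau' x <= 1) ->
  [/\ ((b, a) \in qatt Q -> sigma T Q a <= sigma T (restrict Q (rels Q :\ (b, a))) a),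
      ((b, a) \in qsup Q -> sigma T Q a >= sigma T (restrict Q (rels Q :\ (b, a))) a),
      ((b, a) \in qatt Q -> bs Q b <= tau' b -> (forall x, x != b -> tau' x = bs Q x) ->
         sigma T Q a >= sigma T (rebase Q tau') a) &
      ((b, a) \in qsup Q -> bs Q b <= tau' b -> (forall x, x != b -> tau' x = bs Q x) ->
         sigma T Q a <= sigma T (rebase Q tau') a)].

Definition rae (R : realType) (sigma : semantics R) (T : finType) (Q : qbaf R T)
    (a : T) (r : T * T) : R :=
  \sum_(S in powerset (rels Q :\ r))
    ((#|rels Q| - #|S| - 1)`!%:R * (#|S|)`!%:R / (#|rels Q|)`!%:R) *
    (sigma T (restrict Q (S :|: [set r])) a - sigma T (restrict Q S) a).

(* Main.v *)
Require Import Defs.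
From HB Require Import structures.
From mathcomp Require Import all_boot all_order all_algebra.
From mathcomp Require Import reals.
Import Order.TTheory GRing.Theory Num.Theory.
Local Open Scope ring_scope.
Set Implicit Arguments. Unset Strict Implicit. Unset Printing Implicit Defensive.

Definition wit (R : realType) (T : finType) (Q : qbaf R T) (a : T) : bool :=
  [exists c, exists d, [&& (c, a) \in qatt Q, (d, c) \in qatt Q & 1 < #|out_edges Q c|]%N].

Definition sig0 (R : realType) : semantics R :=
  fun T Q a => if wit Q a then 1 else 0.

Lemma in_out (R : realType) (T : finType) (Q : qbaf R T) c e :
  (e \in out_edges Q c) = (e \in rels Q) && (e.1 == c).
Proof. by rewrite /out_edges in_set. Qed.

Lemma wit_mono (R : realType) (T : finType) (Q1 Q2 : qbaf R T) a :
  qatt Q1 \subset qatt Q2 -> rels Q1 \subset rels Q2 -> wit Q1 a -> wit Q2 a.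
Proof.
move=> sA sR /existsP[c /existsP[d /and3P[h1 h2 h3]]].
apply/existsP; exists c; apply/existsP; exists d.
rewrite (subsetP sA _ h1) (subsetP sA _ h2) /=.
apply: leq_trans h3 _; apply: subset_leq_card; apply/subsetP => e.
rewrite !in_out => /andP[h ->]; by rewrite andbT (subsetP sR _ h).
Qed.

Lemma sig0_mono (R : realType) (T : finType) (Q1 Q2 : qbaf R T) a :
  qatt Q1 \subset qatt Q2 -> rels Q1 \subset rels Q2 -> @sig0 R T Q1 a <= @sig0 R T Q2 a.
Proof.
move=> sA sR; rewrite /sig0; case: ifP => h.
  by rewrite (wit_mono sA sR h).
by case: ifP.
Qed.

Definition o0 : 'I_4 := @Ordinal 4 0 isT.
Definition o1 : 'I_4 := @Ordinal 4 1 isT.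
Definition o2 : 'I_4 := @Ordinal 4 2 isT.
Definition o3 : 'I_4 := @Ordinal 4 3 isT.

Definition Q0 (R : realType) : qbaf R 'I_4 :=
  Qbaf [set (o0, o1); (o1, o3)] [set (o1, o2); (o2, o3)] (fun _ => 0).

Lemma Q0_edge (R : realType) x y : edge_rel (Q0 R) x y -> (x < y)%N.
Proof.
rewrite /edge_rel /rels !inE !xpair_eqE.
by case/orP => [/orP|/orP] [] /andP[/eqP-> /eqP->].
Qed.

Lemma Q0_path (R : realType) p y : path (edge_rel (Q0 R)) y p -> (y <= last y p)%N.
Proof.
elim: p y => [|z p IH] y //= /andP[/Q0_edge h /IH h2].
exact: leq_trans (ltnW h) h2.
Qed.

Lemma Q0_acyc (R : realType) : qbaf_acyclic (Q0 R).
Proof.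
move=> x y /Q0_edge hxy; apply/negP => /connectP[p /Q0_path hp ex].
by move: hp; rewrite -ex; move/(leq_trans hxy); rewrite ltnn.
Qed.

Lemma rels_restrict (R : realType) (T : finType) (Q : qbaf R T) S :
  rels (restrict Q S) = rels Q :&: S.
Proof. by rewrite /rels /= setIUl. Qed.

Lemma sig0_monotonic (R : realType) : monotonic_acyclic (@sig0 R).
Proof.
move=> T Q wf ac a b nab hout tau' htau; split.
- move=> _; rewrite /sig0; case: ifP => hw; last by case: ifP; rewrite ?ler01.
  suff -> : wit (restrict Q (rels Q :\ (b, a))) a by [].
  case/existsP: hw => c /existsP[d /and3P[h1 h2 h3]].
  have ncb : c != b.
    apply/eqP => ecb; move: h3; rewrite ecb hout cards1 //.
  have ndc : (d, c) != (b, a).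
    apply/eqP => -[_ eca]; move: h1; rewrite eca => haa.
    have : edge_rel Q a a by rewrite /edge_rel /rels inE haa.
    by move/ac; rewrite connect0.
  apply/existsP; exists c; apply/existsP; exists d.
  rewrite /= !inE h1 h2 ndc xpair_eqE (negbTE ncb) /=.
  apply: leq_trans h3 _; apply: subset_leq_card; apply/subsetP => e.
  rewrite !in_out rels_restrict !inE => /andP[-> /eqP ec]; rewrite ec eqxx !andbT.
  apply/negP => /eqP ee; move: ec; rewrite ee /= => ecb; by rewrite ecb eqxx in ncb.
- move=> _; apply: sig0_mono; first exact: subsetIl.
  by rewrite rels_restrict subsetIl.
- by move=> *; rewrite lexx.
- by move=> *; rewrite lexx.
Qed.

Theorem proposition8 (R : realType) :
  exists sigma : semantics R,
    strength_in_01 sigma /\ monotonic_acyclic sigma /\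
    exists (T : finType) (Q : qbaf R T) (a : T) (r : T * T),
      [/\ wf_qbaf Q, qbaf_acyclic Q, qbaf_multifold Q a r &
          ((r \in qatt Q /\ rae sigma Q a r > 0) \/ (r \in qsup Q /\ rae sigma Q a r < 0))].
Proof.
exists (@sig0 R); split.
  by move=> T Q _ a; rewrite /sig0; case: ifP; rewrite ?lexx ?ler01.
split; first exact: sig0_monotonic.
exists ('I_4 : finType), (Q0 R), o3, (o0, o1); split.
- split; last by move=> ?; rewrite lexx ler01.
  apply/setP => e; rewrite !inE.
  have [->|n1] := eqVneq e (o0,o1); first by []. have [->|n2] := eqVneq e (o1,o3); first by []. by [].
- move=> x y h; exact: (Q0_acyc h).
- split => //.
  + by rewrite /rels !inE.
  + exists [:: (o1, o3)], [:: (o1, o2); (o2, o3)]; split => //=; by rewrite /rels !inE.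
- left; split; first by rewrite !inE.
  set r := (o0, o1).
  set S0 := rels (Q0 R) :\ r.
  rewrite /rae (bigD1 S0) /=; last by rewrite powersetE subxx.
  have Fge0 : forall S : {set 'I_4 * 'I_4}, 0 <=
    ((#|rels (Q0 R)| - #|S| - 1)`!%:R * (#|S|)`!%:R / (#|rels (Q0 R)|)`!%:R) *
    (sig0 (restrict (Q0 R) (S :|: [set r])) o3 - sig0 (restrict (Q0 R) S) o3) :> R.
    move=> S; apply: mulr_ge0; first by apply: divr_ge0; rewrite ?mulr_ge0 ?ler0n.
    rewrite subr_ge0; apply: sig0_mono; first by apply: setIS; apply: subsetUl.
    by rewrite !rels_restrict; apply: setIS; apply: subsetUl.
  have w1 : wit (restrict (Q0 R) (S0 :|: [set r])) o3.
    apply/existsP; exists o1; apply/existsP; exists o0.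
    rewrite /S0 /r /rels !inE /=.
    apply: (@leq_trans #|[set (o1, o2); (o1, o3)]|); first by rewrite cards2.
    apply: subset_leq_card; apply/subsetP => e; rewrite !inE.
    by case/orP => /eqP ->.
  have w2 : wit (restrict (Q0 R) S0) o3 = false.
    rewrite /wit; apply/negbTE/negP => /existsP[c /existsP[d h]]; move: h.
    rewrite /S0 /r /rels !inE !xpair_eqE /=.
    by case: (c =P o1) => [->|_] //=; case: (d =P o0) => [->|_] //=; rewrite !andbF.
  apply: (@lt_le_trans _ _ (((#|rels (Q0 R)| - #|S0| - 1)`!%:R * (#|S0|)`!%:R
      / (#|rels (Q0 R)|)`!%:R) * (1 - 0))).
    by rewrite subr0 mulr1; apply: divr_gt0; rewrite ?mulr_gt0 ?ltr0n ?fact_gt0.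
  rewrite -[X in X <= _]addr0; apply: lerD; last by apply: sumr_ge0 => S _; exact: Fge0.
  apply: ler_wpM2l; first by apply: divr_ge0; rewrite ?mulr_ge0 ?ler0n.
  by rewrite /sig0 w1 w2.
Qed.
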